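(* Let $G$ be a timed region graph, let $\mu\in\Delta_{\mathrm{Min}}$ be regionally constant, let $T$ be a regionally simple regional function and $D$ a regionally constant regional function. Then $\mathrm{Improve}_{\mathrm{Min}}(\mu,(T,D))$ is regionally constant.
   Context: Fix $k\in\mathbb N$. Let $C$ be a finite set of clocks. A clock valuation is a function $\nu:C\to[0,k]$; $V$ is the set of clock valuations. For $t\ge 0$ let $(\nu+t)(c)=\nu(c)+t$; for $C'\subseteq C$ let $\mathrm{Reset}(\nu,C')(c)=0$ if $c\in C'$ and $=\nu(c)$ otherwise. Simple clock constraints are $c\bowtie i$ or $c-c'\bowtie i$ with $c,c'\in C$, $i\in\{0,\dots,k\}$, ${\bowtie}\in\{<,>,=,\le,\ge\}$. A clock region is an equivalence class of $V$ under ''satisfies the same simple clock constraints''; a clock zone is a convex union of clock regions. For a finite set $L$ of locations, a configuration is $s=(\ell,\nu)\in Q=L\times V$; write $s(c)=\nu(c)$ and $s+t=(\ell,\nu+t)$ (defined if $\nu+t\in V$). A region is $(\ell,P)$ (identified with $\{(\ell,\nu):\nu\in P\}$) for a clock region $P$; $[s]$ is the region containing $s$, $\mathcal R$ the set of regions, $\overline R$ the topological closure of $R$. A zone is a set $\{(\ell,\nu):\nu\in W_\ell\}$ with each $W_\ell$ a clock zone. A timed automaton $\mathcal T=(L,C,S,A,E,\delta,\rho,F)$ consists of finite $L$, finite $C$, a zone $S\subseteq Q$ of states, a finite set $A$ of actions, $E:A\to 2^S$ with every $E(a)$ a zone, $\delta:L\times A\to L$, $\rho:A\to 2^C$, and a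 zone $F\subseteq S$ of final states. For $s=(\ell,\nu)$: $s\to_t s'$ if $s'=s+t$ is defined and $s+t'\in S$ for all $t'\in[0,t]$; $s\xrightarrow{a}s'$ if $s'=(\delta(\ell,a),\mathrm{Reset}(\nu,\rho(a)))$, $s,s'\in S$ and $s\in E(a)$. For $(a,t)\in A\times\mathbb R_{\ge0}$, $\mathrm{Succ}(s,(a,t))=(\delta(\ell,a),\mathrm{Reset}(\nu+t,\rho(a)))$. A reachability-time game is $\Gamma=(\mathcal T,L_{\mathrm{Min}},L_{\mathrm{Max}})$ with $(L_{\mathrm{Min}},L_{\mathrm{Max}})$ a partition of $L$; $S_{\mathrm{Min}}$, $S_{\mathrm{Max}}$, $\mathcal R_{\mathrm{Min}}$, $\mathcal R_{\mathrm{Max}}$ are the states/regions with location in $L_{\mathrm{Min}}$ resp. $L_{\mathrm{Max}}$. Region relations: $R\to_*R'$ if there are $s\in R,s'\in R'$, $t\ge 0$ with $s\to_t s'$; $R\to_{+1}R'$ ($R'$ is the time successor of $R$) if $R\to_*R'$, $R\ne R'$, and $R\to_*R''\to_*R'$ implies $R''\in\{R,R'\}$; $R\xrightarrow aR'$ if there are $s\in R,s'\in R'$ with $s\xrightarrow a s'$. $R$ is thin if for all $s\in R$ and $\varepsilon>0$, $[s+\varepsilon]\neq[s]$. For thin $R''$, $b\in\{0,\dots,k\}$, $c\in C$: $R\to_{b,c}R''$ if $R\to_*R''$ and $s+(b-s(c))\in R''$ for all $s\in R$. Simple timed actions: $\mathcal A=A\times\{0,\dots,k\}\times C$; for $\alpha=(a,b,c)$,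 $t(s,\alpha)=b-s(c)$ if $s(c)\le b$ and $0$ otherwise, and $\mathrm{Succ}(s,\alpha)=\mathrm{Succ}(s,(a,t(s,\alpha)))$. For $F$ defined on $\overline{R'}$: $F^\oplus_\alpha(s)=t(s,\alpha)+F(\mathrm{Succ}(s,\alpha))$ and $F^\boxplus_\alpha(s)=1+F(\mathrm{Succ}(s,\alpha))$. Timed region graph $\widehat\Gamma=(\mathcal R,\mathcal M)$: $(R,\alpha,R')\in\mathcal M$ with $\alpha=(a,b,c)$ iff (i) $R\to_{b,c}R''\xrightarrow aR'$ for some $R''$; or (ii) $R\in\mathcal R_{\mathrm{Min}}$ and $R\to_{b,c}R''\to_{+1}R'''\xrightarrow aR'$ for some $R'',R'''$; or (iii) $R\in\mathcal R_{\mathrm{Max}}$ and $R\to_{b,c}R''$, $R'''\to_{+1}R''$, $R'''\xrightarrow aR'$ for some $R'',R'''$. (For $(R,\alpha,R')\in\mathcal M$ and $s\in R$, $\mathrm{Succ}(s,\alpha)\in\overline{R'}$.) Regional functions: maps $T$ assigning to each region $R$ a function $T(R):\overline R\to\mathbb R\cup\{\infty\}$ (resp. $D(R):\overline R\to\mathbb N\cup\{\infty\}$); $\widetilde T(s)=T([s])(s)$. $T$ is regionally simple (regionally constant) if each $T(R)$ is simple (constant), where $F:X\to\mathbb R$ is simple if $F\equiv e$ for some $e\in\mathbb Z$ or $F(s)=e-s(c)$ for some $e\in\mathbb Z$, $c\in C$. Lexicographic order: $(x,y)\le^{\mathrm{lex}}(x',y')$ iff $x<x'$, or $x=x'$ and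 $y\le y'$. Strategies in graphs: for a graph $G=(\mathcal R,\mathcal M')$, $\mathcal M'\subseteq\mathcal M$, a positional strategy for Min is a map $\mu:S_{\mathrm{Min}}\to\mathcal M'$ with $\mu(s)$ of the form $([s],\alpha,R)$; $\Delta_{\mathrm{Min}}$ is the set of these. A strategy is regionally constant if $[s]=[s']$ implies equal values. For $s\in S$ let $M_*(s,(T,D))$ be the set of moves $m=([s],\alpha,R')$ of $G$ at which $(T(R')^\oplus_\alpha(s),D(R')^\boxplus_\alpha(s))$ is lexicographically minimal. Fix a function $\mathrm{Choose}$ selecting an element of each nonempty set of moves. $\mathrm{Improve}_{\mathrm{Min}}(\mu,(T,D))(s)=\mu(s)$ if $\mu(s)\in M_*(s,(T,D))$, and $=\mathrm{Choose}(M_*(s,(T,D)))$ otherwise. *)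

(* Defs.v *)
From Stdlib Require Import Reals ZArith List Classical ClassicalEpsilon
  FunctionalExtensionality PropExtensionality.
Open Scope R_scope.

Section TimedGames.
Context {L C A : Type}.
Variable k : nat.

Definition Val := C -> R.
Definition Conf := (L * Val)%type.
Definition clk (s : Conf) (c : C) : R := snd s c.

Definition inV (nu : Val) : Prop := forall c, 0 <= nu c <= INR k.

Definition delay (nu : Val) (t : R) : Val := fun c => nu c + t.
(* subsets of the finite set C are represented by their characteristic function *)
Definition reset (nu : Val) (X : C -> bool) : Val :=
  fun c => if X c then 0 else nu c.
(* s + t (as a raw configuration; "defined" means inV of the valuation) *)
Definition shift (s : Conf) (t : R) : Conf := (fst s, delay (snd s) t).

Inductive cmp := CLt | CGt | CEq | CLe | CGe.
Definition evc (o : cmp) (x y : R) : Prop :=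
  match o with
  | CLt => x < y | CGt => x > y | CEq => x = y | CLe => x <= y | CGe => x >= y
  end.
Inductive sconstr :=
  | SC1 (c : C) (o : cmp) (i : nat)
  | SC2 (c c' : C) (o : cmp) (i : nat).
Definition sat (nu : Val) (g : sconstr) : Prop :=
  match g with
  | SC1 c o i => evc o (nu c) (INR i)
  | SC2 c c' o i => evc o (nu c - nu c') (INR i)
  end.
Definition constr_ok (g : sconstr) : Prop :=
  match g with SC1 _ _ i => (i <= k)%nat | SC2 _ _ _ i => (i <= k)%nat end.
Definition clock_equiv (nu nu' : Val) : Prop :=
  forall g, constr_ok g -> (sat nu g <-> sat nu' g).

Definition clock_zone (W : Val -> Prop) : Prop :=
  (forall nu, W nu -> inV nu) /\
  (forall nu nu', W nu -> inV nu' -> clock_equiv nu nu' -> W nu') /\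
  (forall nu nu' (l : R), W nu -> W nu' -> 0 <= l <= 1 ->
      W (fun c => l * nu c + (1 - l) * nu' c)).
Definition zone (Z : Conf -> Prop) : Prop :=
  forall l : L, clock_zone (fun nu => Z (l, nu)).

Definition regionOf (s : Conf) : Conf -> Prop :=
  fun s' => fst s' = fst s /\ inV (snd s') /\ clock_equiv (snd s) (snd s').
Definition is_region (Rg : Conf -> Prop) : Prop :=
  exists s, inV (snd s) /\ Rg = regionOf s.
(* topological closure (L discrete, valuations with the sup-norm topology) *)
Definition in_cl (Rg : Conf -> Prop) (s : Conf) : Prop :=
  forall eps, eps > 0 -> exists s', Rg s' /\ fst s' = fst s /\
    forall c, Rabs (snd s' c - snd s c) < eps.

Record TA := mkTA {
  taS : Conf -> Prop;
  taE : A -> Conf -> Prop;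
  taDelta : L -> A -> L;
  taRho : A -> C -> bool;
  taF : Conf -> Prop }.

Definition finite_type (X : Type) : Prop := exists l : list X, forall x, In x l.

Definition wf_TA (T : TA) : Prop :=
  finite_type L /\ finite_type C /\ finite_type A /\
  zone (taS T) /\
  (forall a, zone (taE T a) /\ forall s, taE T a s -> taS T s) /\
  zone (taF T) /\ (forall s, taF T s -> taS T s).

Variable T : TA.

Definition delay_step (s : Conf) (t : R) (s' : Conf) : Prop :=
  0 <= t /\ inV (delay (snd s) t) /\ s' = shift s t /\
  forall t', 0 <= t' <= t -> taS T (shift s t').
Definition act_step (s : Conf) (a : A) (s' : Conf) : Prop :=
  s' = (taDelta T (fst s) a, reset (snd s) (taRho T a)) /\
  taS T s /\ taS T s' /\ taE T a s.
Definition succ (s : Conf) (a : A) (t : R) : Conf :=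
  (taDelta T (fst s) a, reset (delay (snd s) t) (taRho T a)).

Definition reach_star (R1 R2 : Conf -> Prop) : Prop :=
  exists s s' t, R1 s /\ R2 s' /\ delay_step s t s'.
Definition time_succ (R1 R2 : Conf -> Prop) : Prop :=
  reach_star R1 R2 /\ R1 <> R2 /\
  forall R3, is_region R3 -> reach_star R1 R3 -> reach_star R3 R2 ->
    R3 = R1 \/ R3 = R2.
Definition act_rel (a : A) (R1 R2 : Conf -> Prop) : Prop :=
  exists s s', R1 s /\ R2 s' /\ act_step s a s'.
Definition thin (Rg : Conf -> Prop) : Prop :=
  forall s, Rg s -> forall eps, eps > 0 -> regionOf (shift s eps) <> regionOf s.
Definition to_bc (b : nat) (c : C) (R1 R2 : Conf -> Prop) : Prop :=
  thin R2 /\ reach_star R1 R2 /\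
  forall s, R1 s -> R2 (shift s (INR b - clk s c)).

(** Simple timed actions (a, b, c); b is required to be <= k in moves *)
Definition Act := (A * nat * C)%type.
Definition tau (s : Conf) (al : Act) : R :=
  let '(_, b, c) := al in
  if Rle_dec (clk s c) (INR b) then INR b - clk s c else 0.
Definition succ_act (s : Conf) (al : Act) : Conf :=
  let '(a, _, _) := al in succ s a (tau s al).

Variable Lmin : L -> bool. (* L_Min = {l | Lmin l}, L_Max = complement *)
Definition region_min (Rg : Conf -> Prop) : Prop :=
  exists s, Rg s /\ Lmin (fst s) = true.
Definition region_max (Rg : Conf -> Prop) : Prop :=
  exists s, Rg s /\ Lmin (fst s) = false.

Definition Move := ((Conf -> Prop) * Act * (Conf -> Prop))%type.

Definition inM (m : Move) : Prop :=
  let '(R1, al, R2) := m in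
  let '(a, b, c) := al in
  is_region R1 /\ is_region R2 /\ (b <= k)%nat /\
  ( (exists R3, is_region R3 /\ to_bc b c R1 R3 /\ act_rel a R3 R2)
 \/ (region_min R1 /\ exists R3 R4, is_region R3 /\ is_region R4 /\
       to_bc b c R1 R3 /\ time_succ R3 R4 /\ act_rel a R4 R2)
 \/ (region_max R1 /\ exists R3 R4, is_region R3 /\ is_region R4 /\
       to_bc b c R1 R3 /\ time_succ R4 R3 /\ act_rel a R4 R2) ).

Inductive ER := ERfin (r : R) | ERinf.
Inductive EN := ENfin (n : nat) | ENinf.
Definition ER_addR (x : R) (y : ER) : ER :=
  match y with ERfin r => ERfin (x + r) | ERinf => ERinf end.
Definition EN_succ (y : EN) : EN :=
  match y with ENfin n => ENfin (S n) | ENinf => ENinf end.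
Definition ER_lt (x y : ER) : Prop :=
  match x, y with
  | ERfin a, ERfin b => a < b | ERfin _, ERinf => True | ERinf, _ => False end.
Definition EN_le (x y : EN) : Prop :=
  match x, y with
  | ENfin a, ENfin b => (a <= b)%nat | _, ENinf => True | ENinf, ENfin _ => False end.
Definition lex_le (p q : ER * EN) : Prop :=
  ER_lt (fst p) (fst q) \/ (fst p = fst q /\ EN_le (snd p) (snd q)).

(** Regional functions: T R is meaningful on the closure of R *)
Definition RegFunR := (Conf -> Prop) -> Conf -> ER.
Definition RegFunN := (Conf -> Prop) -> Conf -> EN.

Definition regionally_simple (F : RegFunR) : Prop :=
  forall Rg, is_region Rg -> exists e : Z,
    (forall s, in_cl Rg s -> F Rg s = ERfin (IZR e)) \/
    (exists c, forall s, in_cl Rg s -> F Rg s = ERfin (IZR e - clk s c)).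
Definition regionally_constantN (F : RegFunN) : Prop :=
  forall Rg, is_region Rg -> exists d, forall s, in_cl Rg s -> F Rg s = d.

Definition oplus (F : RegFunR) (al : Act) (R2 : Conf -> Prop) (s : Conf) : ER :=
  ER_addR (tau s al) (F R2 (succ_act s al)).
Definition boxplus (F : RegFunN) (al : Act) (R2 : Conf -> Prop) (s : Conf) : EN :=
  EN_succ (F R2 (succ_act s al)).

(** Strategies in a graph G = (regions, Mp), Mp ⊆ M *)
Variable Mp : Move -> Prop.

Definition S_min (s : Conf) : Prop := taS T s /\ Lmin (fst s) = true.

Definition is_strategy_min (mu : Conf -> Move) : Prop :=
  forall s, S_min s -> Mp (mu s) /\ fst (fst (mu s)) = regionOf s.
Definition regionally_constant_strat (mu : Conf -> Move) : Prop :=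
  forall s s', S_min s -> S_min s' -> regionOf s = regionOf s' -> mu s = mu s'.

Definition move_val (F : RegFunR) (D : RegFunN) (m : Move) (s : Conf) : ER * EN :=
  let '(_, al, R2) := m in (oplus F al R2 s, boxplus D al R2 s).

Definition Mstar (F : RegFunR) (D : RegFunN) (s : Conf) : Move -> Prop :=
  fun m => Mp m /\ fst (fst m) = regionOf s /\
    forall m', Mp m' -> fst (fst m') = regionOf s ->
      lex_le (move_val F D m s) (move_val F D m' s).

Definition choose_ok (Choose : (Move -> Prop) -> Move) : Prop :=
  forall X : Move -> Prop, (exists m, X m) -> X (Choose X).

Definition Improve_min (Choose : (Move -> Prop) -> Move) (mu : Conf -> Move)
  (F : RegFunR) (D : RegFunN) (s : Conf) : Move :=
  if excluded_middle_informative (Mstar F D s (mu s)) then mu s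
  else Choose (Mstar F D s).

End TimedGames.

(* Main.v *)
Require Import Defs.
From Stdlib Require Import Reals ZArith List Lra Lia Classical ClassicalEpsilon
  FunctionalExtensionality PropExtensionality.
Open Scope R_scope.

Section Aux.
Context {L C A : Type}.
Variable k : nat.

Definition agree (x x' y y' : R) :=
  (x < y <-> x' < y') /\ (x = y <-> x' = y') /\ (x > y <-> x' > y').

Lemma agree_evc o x x' y y' : agree x x' y y' -> (evc o x y <-> evc o x' y').
Proof.
  intros [H1 [H2 H3]]; destruct o; simpl; unfold Rle, Rge; tauto.
Qed.

Lemma agree_of x x' y y' :
  (x < y /\ x' < y') \/ (x = y /\ x' = y') \/ (x > y /\ x' > y') -> agree x x' y y'.
Proof. intros H; unfold agree; repeat split; intro; lra. Qed.

Lemma agree_refl x y : agree x x y y.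
Proof. unfold agree; tauto. Qed.

Lemma agree_neg x x' y : agree x x' (-y) (-y) -> agree (0 - x) (0 - x') y y.
Proof.
  intros [H1 [H2 H3]]; apply agree_of.
  destruct (total_order_T x (-y)) as [[h|h]|h].
  - right; right. assert (x' < -y) by (apply H1; auto). lra.
  - right; left. assert (x' = -y) by (apply H2; auto). lra.
  - left. assert (x' > -y) by (apply H3; auto). lra.
Qed.

Lemma Z_small (z : Z) : (0 <= z)%Z -> (z <= Z.of_nat k)%Z ->
  exists i, (i <= k)%nat /\ IZR z = INR i.
Proof.
  intros h1 h2; exists (Z.to_nat z); split; [lia|].
  rewrite INR_IZR_INZ, Z2Nat.id; auto.
Qed.

Lemma INRk : INR k = IZR (Z.of_nat k).
Proof. apply INR_IZR_INZ. Qed.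

Lemma Aclk (nu nu' : @Val C) : clock_equiv k nu nu' -> inV k nu -> inV k nu' ->
  forall (c : C) (z : Z), agree (nu c) (nu' c) (IZR z) (IZR z).
Proof.
  intros H Hv Hv' c z. specialize (Hv c); specialize (Hv' c).
  destruct (Z_lt_le_dec z 0) as [h|h].
  - apply IZR_lt in h. apply agree_of. right; right; lra.
  - destruct (Z_le_gt_dec z (Z.of_nat k)) as [h2|h2].
    + destruct (Z_small z h h2) as [i [hi ->]].
      pose proof (H (SC1 c CLt i) hi) as E1.
      pose proof (H (SC1 c CEq i) hi) as E2.
      pose proof (H (SC1 c CGt i) hi) as E3.
      simpl in E1, E2, E3. unfold agree; tauto.
    + apply Z.gt_lt, IZR_lt in h2. rewrite <- INRk in h2.
      apply agree_of. left; lra.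
Qed.

Lemma Adiff (nu nu' : @Val C) : clock_equiv k nu nu' -> inV k nu -> inV k nu' ->
  forall (c c' : C) (z : Z), agree (nu c - nu c') (nu' c - nu' c') (IZR z) (IZR z).
Proof.
  intros H Hv Hv' c c' z.
  pose proof (Hv c); pose proof (Hv' c); pose proof (Hv c'); pose proof (Hv' c').
  destruct (Z_lt_le_dec z 0) as [h|h].
  - destruct (Z_le_gt_dec (-z) (Z.of_nat k)) as [h2|h2].
    + assert (h0 : (0 <= - z)%Z) by lia.
      destruct (Z_small (-z) h0 h2) as [i [hi Hi]].
      rewrite opp_IZR in Hi.
      pose proof (H (SC2 c' c CLt i) hi) as E1.
      pose proof (H (SC2 c' c CEq i) hi) as E2.
      pose proof (H (SC2 c' c CGt i) hi) as E3.
      simpl in E1, E2, E3.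
      unfold agree; repeat split; intro HH.
      * assert (nu' c' - nu' c > INR i) by (apply E3; lra). lra.
      * assert (nu c' - nu c > INR i) by (apply E3; lra). lra.
      * assert (nu' c' - nu' c = INR i) by (apply E2; lra). lra.
      * assert (nu c' - nu c = INR i) by (apply E2; lra). lra.
      * assert (nu' c' - nu' c < INR i) by (apply E1; lra). lra.
      * assert (nu c' - nu c < INR i) by (apply E1; lra). lra.
    + assert (h3 : (Z.of_nat k < - z)%Z) by lia. apply IZR_lt in h3.
      rewrite opp_IZR, <- INRk in h3. apply agree_of. right; right; lra.
  - destruct (Z_le_gt_dec z (Z.of_nat k)) as [h2|h2].
    + destruct (Z_small z h h2) as [i [hi ->]].
      pose proof (H (SC2 c c' CLt i) hi) as E1.
      pose proof (H (SC2 c c' CEq i) hi) as E2.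
      pose proof (H (SC2 c c' CGt i) hi) as E3.
      simpl in E1, E2, E3. unfold agree; tauto.
    + apply Z.gt_lt, IZR_lt in h2. rewrite <- INRk in h2.
      apply agree_of. left; lra.
Qed.

Lemma ceq_refl (nu : @Val C) : clock_equiv k nu nu.
Proof. intros g _; tauto. Qed.
Lemma ceq_sym (nu nu' : @Val C) : clock_equiv k nu nu' -> clock_equiv k nu' nu.
Proof. intros H g hg; specialize (H g hg); tauto. Qed.
Lemma ceq_trans (a b c : @Val C) : clock_equiv k a b -> clock_equiv k b c -> clock_equiv k a c.
Proof. intros H1 H2 g hg; specialize (H1 g hg); specialize (H2 g hg); tauto. Qed.

Lemma inV_reset (nu : @Val C) X : inV k nu -> inV k (reset nu X).
Proof.
  intros H c; unfold reset; destruct (X c); auto. pose proof (pos_INR k); lra.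
Qed.

Lemma reset_equiv (nu nu' : @Val C) X : clock_equiv k nu nu' -> inV k nu -> inV k nu' ->
  clock_equiv k (reset nu X) (reset nu' X).
Proof.
  intros H Hv Hv' g hg. destruct g as [c o i | c c' o i]; simpl; apply agree_evc;
    unfold reset.
  - destruct (X c). apply agree_refl. rewrite INR_IZR_INZ; apply Aclk; auto.
  - destruct (X c), (X c').
    + apply agree_refl.
    + apply agree_neg. rewrite INR_IZR_INZ, <- opp_IZR. apply Aclk; auto.
    + rewrite !Rminus_0_r, INR_IZR_INZ. apply Aclk; auto.
    + rewrite INR_IZR_INZ. apply Adiff; auto.
Qed.

Lemma list_gap (l : list R) : exists d, d > 0 /\ forall r, In r l -> r > 0 -> d < r.
Proof.
  induction l as [|a l [d [Hd H]]].
  - exists 1; split; [lra| intros r []].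
  - destruct (Rlt_dec 0 a) as [ha|ha].
    + exists (Rmin d (a/2)); split.
      * apply Rmin_glb_lt; lra.
      * intros r [<-|hr] hr0.
        -- pose proof (Rmin_r d (a/2)); lra.
        -- pose proof (Rmin_l d (a/2)); pose proof (H r hr hr0); lra.
    + exists d; split; auto. intros r [<-|hr] hr0; [lra| auto].
Qed.

Lemma EV (nu : @Val C) : finite_type C -> exists d, d > 0 /\
  forall c i, (i <= k)%nat ->
    (nu c < INR i -> nu c + d < INR i) /\ (nu c > INR i -> nu c - d > INR i).
Proof.
  intros [lc Hlc].
  destruct (list_gap (flat_map (fun c => flat_map
     (fun i => INR i - nu c :: nu c - INR i :: nil) (seq 0 (S k))) lc)) as [d [Hd H]].
  exists d; split; auto. intros c i hi.
  assert (Hin : forall r, r = INR i - nu c \/ r = nu c - INR i ->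
     In r (flat_map (fun c => flat_map
     (fun i => INR i - nu c :: nu c - INR i :: nil) (seq 0 (S k))) lc)).
  { intros r hr. apply in_flat_map. exists c; split; auto.
    apply in_flat_map. exists i; split.
    - apply in_seq; lia.
    - simpl; destruct hr; subst; auto. }
  split; intro h.
  - assert (d < INR i - nu c) by (apply H; [apply Hin; auto | lra]). lra.
  - assert (d < nu c - INR i) by (apply H; [apply Hin; auto | lra]). lra.
Qed.

Definition gapf (nu : @Val C) d := forall c i, (i <= k)%nat ->
    (nu c < INR i -> nu c + d < INR i) /\ (nu c > INR i -> nu c - d > INR i).

Lemma fwd_equiv (nu nu' : @Val C) d0 d0' d d' :
  clock_equiv k nu nu' -> gapf nu d0 -> gapf nu' d0' ->
  0 < d <= d0 -> 0 < d' <= d0' ->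
  clock_equiv k (delay nu d) (delay nu' d').
Proof.
  intros H G G' hd hd' g hg. destruct g as [c o i | c c' o i]; simpl in hg |- *;
    apply agree_evc.
  - pose proof (H (SC1 c CLt i) hg) as E1.
    pose proof (H (SC1 c CEq i) hg) as E2.
    pose proof (H (SC1 c CGt i) hg) as E3. simpl in E1, E2, E3.
    destruct (G c i hg) as [G1 _]; destruct (G' c i hg) as [G1' _].
    apply agree_of. unfold delay.
    destruct (total_order_T (nu c) (INR i)) as [[h|h]|h].
    + assert (nu' c < INR i) by tauto.
      left; split; [pose proof (G1 h) | pose proof (G1' H0)]; lra.
    + assert (nu' c = INR i) by tauto. right; right; lra.
    + assert (nu' c > INR i) by tauto. right; right; lra.
  - unfold delay.
    replace (nu c + d - (nu c' + d)) with (nu c - nu c') by ring.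
    replace (nu' c + d' - (nu' c' + d')) with (nu' c - nu' c') by ring.
    pose proof (H (SC2 c c' CLt i) hg) as E1.
    pose proof (H (SC2 c c' CEq i) hg) as E2.
    pose proof (H (SC2 c c' CGt i) hg) as E3. simpl in E1, E2, E3.
    unfold agree; tauto.
Qed.

Lemma bwd_equiv (nu nu' : @Val C) d0 d0' d d' :
  clock_equiv k nu nu' -> gapf nu d0 -> gapf nu' d0' ->
  0 < d <= d0 -> 0 < d' <= d0' ->
  clock_equiv k (delay nu (-d)) (delay nu' (-d')).
Proof.
  intros H G G' hd hd' g hg. destruct g as [c o i | c c' o i]; simpl in hg |- *;
    apply agree_evc.
  - pose proof (H (SC1 c CLt i) hg) as E1.
    pose proof (H (SC1 c CEq i) hg) as E2.
    pose proof (H (SC1 c CGt i) hg) as E3. simpl in E1, E2, E3.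
    destruct (G c i hg) as [_ G1]; destruct (G' c i hg) as [_ G1'].
    apply agree_of. unfold delay.
    destruct (total_order_T (nu c) (INR i)) as [[h|h]|h].
    + assert (nu' c < INR i) by tauto. left; lra.
    + assert (nu' c = INR i) by tauto. left; lra.
    + assert (nu' c > INR i) by tauto.
      right; right; split; [pose proof (G1 h) | pose proof (G1' H0)]; lra.
  - unfold delay.
    replace (nu c + - d - (nu c' + - d)) with (nu c - nu c') by ring.
    replace (nu' c + - d' - (nu' c' + - d')) with (nu' c - nu' c') by ring.
    pose proof (H (SC2 c c' CLt i) hg) as E1.
    pose proof (H (SC2 c c' CEq i) hg) as E2.
    pose proof (H (SC2 c c' CGt i) hg) as E3. simpl in E1, E2, E3.
    unfold agree; tauto.
Qed.

Lemma region_of_mem (Rg : @Conf L C -> Prop) z : is_region k Rg -> Rg z -> Rg = regionOf k z.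
Proof.
  intros [r [_ ->]] [h1 [h2 h3]].
  apply functional_extensionality; intro w; apply propositional_extensionality.
  unfold regionOf; split; intros [w1 [w2 w3]]; (split; [congruence|split; [auto|]]).
  - eapply ceq_trans; [apply ceq_sym; eauto | eauto].
  - eapply ceq_trans; eauto.
Qed.

Lemma region_eq (Ra Rb : @Conf L C -> Prop) z :
  is_region k Ra -> is_region k Rb -> Ra z -> Rb z -> Ra = Rb.
Proof.
  intros; rewrite (region_of_mem Ra z), (region_of_mem Rb z); auto.
Qed.

Lemma mem_self (z : @Conf L C) : inV k (snd z) -> regionOf k z z.
Proof. intros h; unfold regionOf; split; [auto|split; [auto|apply ceq_refl]]. Qed.

Lemma mem_inV (Rg : @Conf L C -> Prop) z : is_region k Rg -> Rg z -> inV k (snd z).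
Proof. intros [r [_ ->]] [_ [h _]]; auto. Qed.

Lemma mem_rel (Rg : @Conf L C -> Prop) z w : is_region k Rg -> Rg z -> Rg w ->
  fst z = fst w /\ clock_equiv k (snd z) (snd w).
Proof.
  intros [r [_ ->]] [h1 [_ h3]] [g1 [_ g3]]. split; [congruence|].
  eapply ceq_trans; [apply ceq_sym|]; eauto.
Qed.

Lemma delay_delay (nu : @Val C) a b : delay (delay nu a) b = delay nu (a + b).
Proof. unfold delay; apply functional_extensionality; intro; ring. Qed.

Lemma shift_shift (s : @Conf L C) a b : Defs.shift (Defs.shift s a) b = Defs.shift s (a + b).
Proof. unfold Defs.shift; simpl; rewrite delay_delay; auto. Qed.

Lemma shift_0 (s : @Conf L C) : Defs.shift s 0 = s.
Proof.
  destruct s as [l nu]; unfold Defs.shift, delay; simpl; f_equal.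
  apply functional_extensionality; intro; ring.
Qed.


Variable TA0 : @TA L C A.

Lemma next_fwd (HfC : finite_type C) (R3 R4 : @Conf L C -> Prop) y :
  is_region k R3 -> is_region k R4 -> thin k R3 -> time_succ k TA0 R3 R4 -> R3 y ->
  exists d0, d0 > 0 /\ forall d, 0 < d <= d0 -> R4 (Defs.shift y d).
Proof.
  intros HR3 HR4 Hth [[x3 [x4 [t [Hx3 [Hx4 [Ht0 [HinV [Hx4eq HtaS]]]]]]]] [Hne Hmin]] Hy.
  assert (Ht : t > 0).
  { destruct (Req_dec t 0) as [e|e]; [|lra].
    exfalso; apply Hne. subst t. rewrite shift_0 in Hx4eq. subst x4.
    apply (region_eq R3 R4 x3); auto. }
  pose proof (mem_inV _ _ HR3 Hx3) as Vx3.
  pose proof (mem_inV _ _ HR3 Hy) as Vy.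
  destruct (mem_rel _ _ _ HR3 Hx3 Hy) as [Fxy Exy].
  destruct (EV (snd x3) HfC) as [dx [Hdx Gx]].
  destruct (EV (snd y) HfC) as [dy [Hdy Gy]].
  set (d1 := Rmin dx (t/2)).
  assert (Hd1 : 0 < d1 <= dx /\ d1 < t).
  { unfold d1; pose proof (Rmin_l dx (t/2)); pose proof (Rmin_r dx (t/2));
    assert (0 < Rmin dx (t/2)) by (apply Rmin_glb_lt; lra); lra. }
  set (z := Defs.shift x3 d1).
  assert (Vz : inV k (snd z)).
  { intros c; simpl; unfold delay. specialize (Vx3 c); specialize (HinV c).
    unfold delay in HinV; lra. }
  assert (HQ : is_region k (regionOf k z)) by (exists z; auto).
  assert (HA : reach_star k TA0 R3 (regionOf k z)).
  { exists x3, z, d1. split; [auto|split; [apply mem_self; auto|]].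
    split; [lra|split; [exact Vz|split; [reflexivity|]]].
    intros t' ht'; apply HtaS; lra. }
  assert (HB : reach_star k TA0 (regionOf k z) R4).
  { exists z, x4, (t - d1). split; [apply mem_self; auto|split; [auto|]].
    split; [lra|split; [|split]].
    - unfold z; simpl. rewrite delay_delay. replace (d1 + (t - d1)) with t by ring. exact HinV.
    - rewrite Hx4eq; unfold z; rewrite shift_shift; f_equal; ring.
    - intros t' ht'; unfold z; rewrite shift_shift; apply HtaS; lra. }
  destruct (Hmin _ HQ HA HB) as [HQ3|HQ4].
  - exfalso. apply (Hth x3 Hx3 d1 ltac:(lra)).
    fold z. rewrite HQ3. apply region_of_mem; auto.
  - exists dy; split; auto. intros d hd. rewrite <- HQ4.
    unfold regionOf. split; [simpl; unfold z; simpl; congruence|split].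
    + intros c; simpl; unfold delay. specialize (Vy c). split; [lra|].
      destruct (total_order_T (snd y c) (INR k)) as [[h|h]|h].
      * destruct (Gy c k (le_n k)) as [G1 _]. specialize (G1 h); lra.
      * exfalso. pose proof (Exy (SC1 c CEq k) (le_n k)) as E; simpl in E.
        specialize (Vz c); simpl in Vz; unfold delay in Vz.
        assert (snd x3 c = INR k) by (apply (proj2 E); auto). lra.
      * lra.
    + unfold z; simpl. eapply fwd_equiv; eauto; lra.
Qed.

Lemma next_bwd (HfC : finite_type C) (R3 R4 : @Conf L C -> Prop) y :
  is_region k R3 -> is_region k R4 -> thin k R3 -> time_succ k TA0 R4 R3 -> R3 y ->
  exists d0, d0 > 0 /\ forall d, 0 < d <= d0 -> R4 (Defs.shift y (-d)).
Proof.
  intros HR3 HR4 Hth [[x4 [x3 [t [Hx4 [Hx3 [Ht0 [HinV [Hx3eq HtaS]]]]]]]] [Hne Hmin]] Hy.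
  assert (Ht : t > 0).
  { destruct (Req_dec t 0) as [e|e]; [|lra].
    exfalso; apply Hne. subst t. rewrite shift_0 in Hx3eq. subst x3.
    apply (region_eq R4 R3 x4); auto. }
  pose proof (mem_inV _ _ HR4 Hx4) as Vx4.
  pose proof (mem_inV _ _ HR3 Hy) as Vy.
  destruct (mem_rel _ _ _ HR3 Hx3 Hy) as [Fxy Exy].
  destruct (EV (snd x3) HfC) as [dx [Hdx Gx]].
  destruct (EV (snd y) HfC) as [dy [Hdy Gy]].
  set (d1 := Rmin dx (t/2)).
  assert (Hd1 : 0 < d1 <= dx /\ d1 < t).
  { unfold d1; pose proof (Rmin_l dx (t/2)); pose proof (Rmin_r dx (t/2));
    assert (0 < Rmin dx (t/2)) by (apply Rmin_glb_lt; lra); lra. }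
  set (z := Defs.shift x4 (t - d1)).
  assert (Vz : inV k (snd z)).
  { intros c; simpl; unfold delay. specialize (Vx4 c); specialize (HinV c).
    unfold delay in HinV; lra. }
  assert (Hzx3 : Defs.shift z d1 = x3).
  { rewrite Hx3eq; unfold z; rewrite shift_shift; f_equal; ring. }
  assert (HQ : is_region k (regionOf k z)) by (exists z; auto).
  assert (HA : reach_star k TA0 R4 (regionOf k z)).
  { exists x4, z, (t - d1). split; [auto|split; [apply mem_self; auto|]].
    split; [lra|split; [exact Vz|split; [reflexivity|]]].
    intros t' ht'; apply HtaS; lra. }
  assert (HB : reach_star k TA0 (regionOf k z) R3).
  { exists z, x3, d1. split; [apply mem_self; auto|split; [auto|]].
    split; [lra|split; [|split]].
    - unfold z; simpl. rewrite delay_delay. replace (t - d1 + d1) with t by ring. exact HinV.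
    - symmetry; exact Hzx3.
    - intros t' ht'; unfold z; rewrite shift_shift; apply HtaS; lra. }
  destruct (Hmin _ HQ HA HB) as [HQ4|HQ3].
  - exists dy; split; auto. intros d hd. rewrite <- HQ4.
    assert (Fx : fst x3 = fst x4) by (rewrite Hx3eq; reflexivity).
    assert (Vx3 : forall c, snd x3 c = snd x4 c + t) by (intro c; rewrite Hx3eq; reflexivity).
    unfold regionOf. split; [simpl; unfold z; simpl; congruence|split].
    + intros c; simpl; unfold delay. specialize (Vy c). split; [|lra].
      pose proof (Exy (SC1 c CGt 0) (Nat.le_0_l k)) as E; simpl in E.
      specialize (Vx4 c). rewrite Vx3 in E.
      assert (h0 : snd y c > 0) by (apply E; lra).
      destruct (Gy c 0%nat (Nat.le_0_l k)) as [_ G1]. simpl in G1.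
      specialize (G1 h0). lra.
    + replace (snd z) with (delay (snd x3) (-d1)).
      * eapply bwd_equiv; eauto; lra.
      * rewrite Hx3eq; unfold z; simpl; rewrite delay_delay; f_equal; ring.
  - exfalso. assert (Hz : R3 z) by (rewrite <- HQ3; apply mem_self; auto).
    apply (Hth z Hz d1 ltac:(lra)).
    rewrite Hzx3, HQ3. symmetry; apply region_of_mem; auto.
Qed.

Lemma ACT (R4 R2 : @Conf L C -> Prop) a w :
  is_region k R4 -> is_region k R2 -> act_rel TA0 a R4 R2 -> R4 w ->
  R2 (taDelta TA0 (fst w) a, reset (snd w) (taRho TA0 a)).
Proof.
  intros HR4 HR2 [w4 [w2 [Hw4 [Hw2 [Heq _]]]]] Hw.
  destruct (mem_rel _ _ _ HR4 Hw4 Hw) as [F E].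
  rewrite (region_of_mem R2 w2 HR2 Hw2). subst w2.
  unfold regionOf; simpl. split; [congruence|split].
  - apply inV_reset; apply (mem_inV R4); auto.
  - apply reset_equiv; [exact E | apply (mem_inV R4); auto | apply (mem_inV R4); auto].
Qed.

Lemma SIGN (R1 R3 : @Conf L C -> Prop) b c s :
  is_region k R1 -> is_region k R3 -> (b <= k)%nat -> to_bc k TA0 b c R1 R3 -> R1 s ->
  clk s c <= INR b.
Proof.
  intros HR1 HR3 hb [_ [[x1 [x3 [t [Hx1 [Hx3 [Ht [_ [Hx3eq _]]]]]]]] Hall]] Hs.
  destruct (Rle_dec (clk s c) (INR b)) as [h|h]; auto. exfalso.
  destruct (mem_rel _ _ _ HR1 Hs Hx1) as [_ E1].
  pose proof (E1 (SC1 c CGt b) hb) as E; simpl in E. unfold clk in h.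
  assert (hx1 : snd x1 c > INR b) by (apply E; lra).
  pose proof (Hall x1 Hx1) as Hz.
  destruct (mem_rel _ _ _ HR3 Hz Hx3) as [_ E3].
  pose proof (E3 (SC1 c CEq b) hb) as E'; simpl in E'. unfold delay, clk in E'.
  rewrite Hx3eq in E'; simpl in E'; unfold delay in E'.
  assert (snd x1 c + t = INR b) by (apply E'; ring). lra.
Qed.


Lemma CL (HfC : finite_type C) Lmin (R1 R2 : @Conf L C -> Prop) a b c s :
  inM k TA0 Lmin (R1, (a, b, c), R2) -> R1 s ->
  tau s (a, b, c) = INR b - clk s c /\ in_cl R2 (succ_act TA0 s (a, b, c)).
Proof.
  intros [HR1 [HR2 [hb Hc]]] Hs.
  assert (Htau : forall R3, is_region k R3 -> to_bc k TA0 b c R1 R3 ->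
            tau s (a,b,c) = INR b - clk s c).
  { intros R3 HR3 Hbc. pose proof (SIGN R1 R3 b c s HR1 HR3 hb Hbc Hs). unfold tau.
    destruct (Rle_dec (clk s c) (INR b)); [auto| contradiction]. }
  assert (Hsh : forall R3, to_bc k TA0 b c R1 R3 -> R3 (Defs.shift s (INR b - clk s c))).
  { intros R3 [_ [_ H]]; apply H; auto. }
  change (succ_act TA0 s (a,b,c)) with (succ TA0 s a (tau s (a,b,c))).
  destruct Hc as [Hc|[Hc|Hc]];
    [destruct Hc as [R3 [HR3 [Hbc Hact]]]
    | destruct Hc as [_ [R3 [R4 [HR3 [HR4 [Hbc [Hts Hact]]]]]]]
    | destruct Hc as [_ [R3 [R4 [HR3 [HR4 [Hbc [Hts Hact]]]]]]]];
    rewrite (Htau R3 HR3 Hbc); split; auto.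
  - intros eps heps. exists (succ TA0 s a (INR b - clk s c)). split.
    + exact (ACT R3 R2 a _ HR3 HR2 Hact (Hsh R3 Hbc)).
    + split; [reflexivity|]. intro c'. unfold Rminus at 1. rewrite Rplus_opp_r, Rabs_R0. lra.
  - destruct (next_fwd HfC R3 R4 _ HR3 HR4 (proj1 Hbc) Hts (Hsh R3 Hbc)) as [d0 [Hd0 Hn]].
    intros eps heps. set (d := Rmin d0 (eps/2)).
    assert (Hd : 0 < d <= d0 /\ d < eps).
    { unfold d; pose proof (Rmin_l d0 (eps/2)); pose proof (Rmin_r d0 (eps/2));
      assert (0 < Rmin d0 (eps/2)) by (apply Rmin_glb_lt; lra); lra. }
    exists (taDelta TA0 (fst s) a,
            reset (delay (delay (snd s) (INR b - clk s c)) d) (taRho TA0 a)). split.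
    + exact (ACT R4 R2 a _ HR4 HR2 Hact (Hn d (proj1 Hd))).
    + split; [reflexivity|]. intro c'. unfold succ; simpl. unfold reset, delay.
      destruct (taRho TA0 a c').
      * replace (0 - 0) with 0 by ring. rewrite Rabs_R0; lra.
      * match goal with |- Rabs ?x < _ => replace x with d by ring end.
        rewrite Rabs_pos_eq; lra.
  - destruct (next_bwd HfC R3 R4 _ HR3 HR4 (proj1 Hbc) Hts (Hsh R3 Hbc)) as [d0 [Hd0 Hn]].
    intros eps heps. set (d := Rmin d0 (eps/2)).
    assert (Hd : 0 < d <= d0 /\ d < eps).
    { unfold d; pose proof (Rmin_l d0 (eps/2)); pose proof (Rmin_r d0 (eps/2));
      assert (0 < Rmin d0 (eps/2)) by (apply Rmin_glb_lt; lra); lra. }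
    exists (taDelta TA0 (fst s) a,
            reset (delay (delay (snd s) (INR b - clk s c)) (-d)) (taRho TA0 a)). split.
    + exact (ACT R4 R2 a _ HR4 HR2 Hact (Hn d (proj1 Hd))).
    + split; [reflexivity|]. intro c'. unfold succ; simpl. unfold reset, delay.
      destruct (taRho TA0 a c').
      * replace (0 - 0) with 0 by ring. rewrite Rabs_R0; lra.
      * match goal with |- Rabs ?x < _ => replace x with (-d) by ring end.
        rewrite Rabs_Ropp, Rabs_pos_eq; lra.
Qed.

Lemma VAL (HfC : finite_type C) Lmin (T : @RegFunR L C) (D : @RegFunN L C) (m : @Move L C A) :
  regionally_simple k T -> regionally_constantN k D -> inM k TA0 Lmin m ->
  exists (E : Z) (x : C) (d : EN), forall s, fst (fst m) s ->
    move_val TA0 T D m s = (ERfin (IZR E - clk s x), d).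
Proof.
  intros HT HD Hm. destruct m as [[R1 [[a b] c]] R2].
  pose proof Hm as [HR1 [HR2 _]].
  destruct (HD R2 HR2) as [d Hd].
  destruct (HT R2 HR2) as [e [He | [c' He]]].
  - exists (Z.of_nat b + e)%Z, c, (EN_succ d). intros s Hs. simpl in Hs.
    destruct (CL HfC Lmin R1 R2 a b c s Hm Hs) as [Ht Hcl].
    change (move_val TA0 T D (R1, (a, b, c), R2) s) with
      (oplus TA0 T (a,b,c) R2 s, boxplus TA0 D (a,b,c) R2 s).
    unfold oplus, boxplus. rewrite (Hd _ Hcl), (He _ Hcl), Ht. simpl.
    f_equal. f_equal. rewrite plus_IZR, <- INR_IZR_INZ. ring.
  - destruct (taRho TA0 a c') eqn:Hr.
    + exists (Z.of_nat b + e)%Z, c, (EN_succ d). intros s Hs. simpl in Hs.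
      destruct (CL HfC Lmin R1 R2 a b c s Hm Hs) as [Ht Hcl].
      change (move_val TA0 T D (R1, (a, b, c), R2) s) with
        (oplus TA0 T (a,b,c) R2 s, boxplus TA0 D (a,b,c) R2 s).
      unfold oplus, boxplus. rewrite (Hd _ Hcl), (He _ Hcl).
      change (succ_act TA0 s (a,b,c)) with (succ TA0 s a (tau s (a,b,c))).
      rewrite Ht. unfold succ, clk, reset; cbn [fst snd ER_addR]. rewrite Hr.
      f_equal. f_equal. rewrite plus_IZR, <- INR_IZR_INZ. ring.
    + exists e, c', (EN_succ d). intros s Hs. simpl in Hs.
      destruct (CL HfC Lmin R1 R2 a b c s Hm Hs) as [Ht Hcl].
      change (move_val TA0 T D (R1, (a, b, c), R2) s) with
        (oplus TA0 T (a,b,c) R2 s, boxplus TA0 D (a,b,c) R2 s).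
      unfold oplus, boxplus. rewrite (Hd _ Hcl), (He _ Hcl).
      change (succ_act TA0 s (a,b,c)) with (succ TA0 s a (tau s (a,b,c))).
      rewrite Ht. unfold succ, clk, reset; cbn [fst snd ER_addR]. rewrite Hr. unfold delay.
      f_equal. f_equal. ring.
Qed.

Lemma CMP (s s' : @Conf L C) E1 E2 x1 x2 (d1 d2 : EN) :
  inV k (snd s) -> inV k (snd s') -> clock_equiv k (snd s) (snd s') ->
  (lex_le (ERfin (IZR E1 - clk s x1), d1) (ERfin (IZR E2 - clk s x2), d2) <->
   lex_le (ERfin (IZR E1 - clk s' x1), d1) (ERfin (IZR E2 - clk s' x2), d2)).
Proof.
  intros V V' E. destruct (Adiff _ _ E V V' x2 x1 (E2 - E1)) as [H1 [H2 H3]].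
  rewrite minus_IZR in H1, H2. unfold lex_le, clk; simpl.
  assert (A1 : IZR E1 - snd s x1 < IZR E2 - snd s x2 <->
               IZR E1 - snd s' x1 < IZR E2 - snd s' x2).
  { split; intro.
    - assert (snd s' x2 - snd s' x1 < IZR E2 - IZR E1) by (apply H1; lra); lra.
    - assert (snd s x2 - snd s x1 < IZR E2 - IZR E1) by (apply H1; lra); lra. }
  assert (A2 : ERfin (IZR E1 - snd s x1) = ERfin (IZR E2 - snd s x2) <->
               ERfin (IZR E1 - snd s' x1) = ERfin (IZR E2 - snd s' x2)).
  { split; intro HH; injection HH; intro; f_equal.
    - assert (snd s' x2 - snd s' x1 = IZR E2 - IZR E1) by (apply H2; lra); lra.
    - assert (snd s x2 - snd s x1 = IZR E2 - IZR E1) by (apply H2; lra); lra. }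
  tauto.
Qed.

End Aux.

Theorem mainTheorem15 (k : nat) (L C A : Type) (TA0 : @TA L C A)
  (Hwf : wf_TA k TA0) (Lmin : L -> bool)
  (Mp : @Move L C A -> Prop)
  (HG : forall m, Mp m -> inM k TA0 Lmin m)
  (mu : @Conf L C -> @Move L C A)
  (Hmu : is_strategy_min k TA0 Lmin Mp mu)
  (Hmuc : regionally_constant_strat k TA0 Lmin mu)
  (T : @RegFunR L C) (HT : regionally_simple k T)
  (D : @RegFunN L C) (HD : regionally_constantN k D)
  (Choose : (@Move L C A -> Prop) -> @Move L C A) (HC : choose_ok Choose) :
  regionally_constant_strat k TA0 Lmin
    (Improve_min k TA0 Mp Choose mu T D).
Proof.
  assert (HfC : finite_type C) by (destruct Hwf as [_ [h _]]; exact h).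
  assert (HSV : forall s, S_min TA0 Lmin s -> inV k (snd s)).
  { intros [l nu] [HS _]. destruct Hwf as [_ [_ [_ [Hz _]]]].
    destruct (Hz l) as [h _]. exact (h nu HS). }
  intros s s' Hs Hs' Hreg.
  assert (Hmu_eq : mu s = mu s') by (apply Hmuc; auto).
  pose proof (HSV s Hs) as Vs. pose proof (HSV s' Hs') as Vs'.
  assert (Hss : regionOf k s' s) by (rewrite <- Hreg; apply mem_self; auto).
  assert (Hs's : regionOf k s' s') by (apply mem_self; auto).
  assert (Eq : clock_equiv k (snd s) (snd s')).
  { assert (h : regionOf k s s') by (rewrite Hreg; auto). destruct h as [_ [_ h]]; exact h. }
  assert (HM : Mstar k TA0 Mp T D s = Mstar k TA0 Mp T D s').
  { apply functional_extensionality; intro m; apply propositional_extensionality.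
    unfold Mstar. rewrite Hreg.
    assert (Hiff : forall m', Mp m -> Mp m' -> fst (fst m) = regionOf k s' ->
       fst (fst m') = regionOf k s' ->
       (lex_le (move_val TA0 T D m s) (move_val TA0 T D m' s) <->
        lex_le (move_val TA0 T D m s') (move_val TA0 T D m' s'))).
    { intros m' Hm Hm' Hf Hf'.
      destruct (VAL k TA0 HfC Lmin T D m HT HD (HG m Hm)) as [E1 [x1 [d1 H1]]].
      destruct (VAL k TA0 HfC Lmin T D m' HT HD (HG m' Hm')) as [E2 [x2 [d2 H2]]].
      rewrite Hf in H1. rewrite Hf' in H2.
      rewrite (H1 s Hss), (H1 s' Hs's), (H2 s Hss), (H2 s' Hs's).
      apply (CMP k); auto. }
    split; intros [Hm [Hf Hall]]; split; auto; split; auto; intros m' Hm' Hf';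
      specialize (Hall m' Hm' Hf'); specialize (Hiff m' Hm Hm' Hf Hf'); tauto. }
  unfold Improve_min. rewrite Hmu_eq, HM. reflexivity.
Qed.
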